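(* For every $n\in\mathbb N$, $\mathrm{Ind}_{\mathrm B}(\ell_\infty(n):\mathbb C1_n)=n$, where $1_n=(1,\dots,1)\in\ell_\infty(n)$.
   Context: $\ell_\infty(n)$ is $\mathbb C^n$ with the sup norm. For a closed subspace $X_0$ of a Banach space $X$, the bounded index is $\mathrm{Ind}_{\mathrm B}(X:X_0)=\inf\{\|T\|:T\in\mathcal L(X,X_0),\ \|T-\mathrm{id}_X\|\le\|T\|-1\}$, where $\mathcal L(X,X_0)$ denotes bounded linear maps $X\to X_0$ (regarded as maps into $X$); equivalently $\mathrm{Ind}_{\mathrm B}(X:X_0)^{-1}=\sup\{\lambda\ge0:\exists T\in\mathcal L(X,X_0),\ \|T\|=1,\ \|T-\lambda\,\mathrm{id}_X\|\le1-\lambda\}$. *)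

(* Defs.v *)
From HB Require Import structures.
From mathcomp Require Import all_boot all_order all_algebra.
From mathcomp Require Import complex.
From mathcomp Require Import boolp classical_sets reals constructive_ereal ereal.
Set Implicit Arguments. Unset Strict Implicit. Unset Printing Implicit Defensive.
Import Order.TTheory GRing.Theory Num.Theory.
Local Open Scope ring_scope.
Local Open Scope classical_set_scope.

Section LinfDefs.
Variable R : realType.

Definition cmod (z : R[i]) : R := Normc.normc z.

Definition linf_norm (n : nat) (x : 'cV[R[i]]_n) : R :=
  \big[Num.max/0]_(k < n) cmod (x k ord0).

Definition op_norm (n : nat) (T : 'M[R[i]]_n) : R :=
  sup [set linf_norm (T *m x) | x in [set x : 'cV[R[i]]_n | linf_norm x <= 1]].

Definition ones (n : nat) : 'cV[R[i]]_n := const_mx 1.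

Definition maps_into_C1 (n : nat) (T : 'M[R[i]]_n) : Prop :=
  forall x : 'cV[R[i]]_n, exists c : R[i], T *m x = c *: ones n.

(* bounded index Ind_B(l_infty(n) : C 1_n), as an extended real (inf of empty set = +oo) *)
Definition IndB_C1 (n : nat) : \bar R :=
  ereal_inf [set (op_norm T)%:E | T in
    [set T : 'M[R[i]]_n | maps_into_C1 T /\ op_norm (T - 1%:M) <= op_norm T - 1]].

End LinfDefs.

(* Main.v *)
Require Import Defs.
From HB Require Import structures.
From mathcomp Require Import all_boot all_order all_algebra.
From mathcomp Require Import complex.
From mathcomp Require Import boolp classical_sets reals constructive_ereal ereal.
From mathcomp Require Import ring lra.
Import Order.TTheory GRing.Theory Num.Theory.
Local Open Scope ring_scope.
Local Open Scope complex_scope.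

Section S.
Variable R : realType.
Local Notation C := R[i].

Lemma normCE (z : C) : `|z| = (cmod z)%:C. Proof. by []. Qed.
Lemma cmod_ge0 (z : C) : 0 <= cmod z. Proof. by have := normr_ge0 z; rewrite normCE lecE /= => /andP[]. Qed.
Lemma cmodM (a b : C) : cmod (a*b) = cmod a * cmod b. Proof. exact: Normc.normcM. Qed.
Lemma cmod_sum (I : Type) (r : seq I) (P : pred I) (f : I -> C) :
  cmod (\sum_(i <- r | P i) f i) <= \sum_(i <- r | P i) cmod (f i).
Proof. rewrite -lecR -normCE (rmorph_sum (real_complex R)) /=. exact: ler_norm_sum. Qed.
Lemma cmod_real (r : R) : cmod r%:C = `|r|.
Proof. by rewrite /cmod /Normc.normc /= expr0n /= addr0 sqrtr_sqr. Qed.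
Lemma cmod0 : cmod (0 : C) = 0. Proof. exact: Normc.normc0. Qed.
Lemma cmod1 : cmod (1 : C) = 1. Proof. exact: Normc.normc1. Qed.
Lemma cmodN (z : C) : cmod (- z) = cmod z. Proof. exact: normcN. Qed.
Lemma cmodD (a b : C) : cmod (a + b) <= cmod a + cmod b. Proof. exact: le_normcD. Qed.
Lemma cmod_conj (z : C) : cmod (conjc z) = cmod z.
Proof. by case: z => a b; rewrite /cmod /Normc.normc /= sqrrN. Qed.
Lemma cmod_eq0 (z : C) : (cmod z == 0) = (z == 0).
Proof. apply/eqP/eqP => [/Normc.eq0_normc //|->]; exact: cmod0. Qed.

Lemma cmodV (z : C) : cmod (z^-1) = (cmod z)^-1. Proof. exact: Normc.normcV. Qed.

Definition sgc (z : C) : C := if z == 0 then 1 else conjc z / (cmod z)%:C.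

Lemma mulJ (z : C) : z * conjc z = ((cmod z) ^+ 2)%:C.
Proof.
case: z => a b; rewrite /cmod /Normc.normc /= sqr_sqrtr ?addr_ge0 ?sqr_ge0 //.
by apply/eqP; rewrite eq_complex /=; apply/andP; split; apply/eqP; ring.
Qed.

Lemma sgc_mod z : cmod (sgc z) <= 1.
Proof.
rewrite /sgc; case: eqP => [_|/eqP z0]; first by rewrite cmod1.
rewrite cmodM cmodV cmod_conj cmod_real ger0_norm ?cmod_ge0 //.
by rewrite divrr // unitfE cmod_eq0.
Qed.

Lemma mul_sgc z : z * sgc z = (cmod z)%:C.
Proof.
rewrite /sgc; case: eqP => [->|/eqP z0]; first by rewrite mul0r cmod0.
have c0 : (cmod z)%:C != 0 by rewrite -normCE normr_eq0.
rewrite mulrA mulJ expr2 rmorphM /= -mulrA divrr ?unitfE // mulr1 //.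
Qed.

Lemma linf_ge n (x : 'cV[C]_n) k : cmod (x k ord0) <= linf_norm x.
Proof. by rewrite /linf_norm (bigD1 k) //= le_max lexx. Qed.

Lemma linf_le n (x : 'cV[C]_n) B : 0 <= B -> (forall k, cmod (x k ord0) <= B) -> linf_norm x <= B.
Proof.
move=> B0 H; rewrite /linf_norm; apply: (big_ind (fun v => v <= B)) => //.
by move=> a b ha hb; rewrite ge_max ha hb.
Qed.

Lemma entry_le n (M : 'M[C]_n) x i : linf_norm x <= 1 ->
  cmod ((M *m x) i ord0) <= \sum_k cmod (M i k).
Proof.
move=> hx; rewrite mxE; apply: le_trans; first exact: cmod_sum.
apply: ler_sum => k _; rewrite cmodM -[X in _ <= X]mulr1 ler_wpM2l ?cmod_ge0 //.
exact: le_trans (linf_ge _ _ _) hx.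
Qed.

Lemma linf0 n : linf_norm (0 : 'cV[C]_n) <= 1.
Proof. by apply: linf_le => // k; rewrite mxE cmod0. Qed.

Lemma opn_le n (M : 'M[C]_n) B :
  (forall x, linf_norm x <= 1 -> linf_norm (M *m x) <= B) -> op_norm M <= B.
Proof.
move=> H; apply: ge_sup; first by exists (linf_norm (M *m 0)), 0 => //; exact: linf0.
by move=> _ [x hx <-]; exact: H.
Qed.

Lemma opn_row n (M : 'M[C]_n) B : 0 <= B -> (forall i, \sum_k cmod (M i k) <= B) ->
  op_norm M <= B.
Proof.
move=> B0 H; apply: opn_le => x hx; apply: linf_le => // i.
exact: le_trans (entry_le _ _ _ _ hx) (H i).
Qed.

Lemma opn_ge n (M : 'M[C]_n) x : linf_norm x <= 1 -> linf_norm (M *m x) <= op_norm M.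
Proof.
move=> hx; apply: ub_le_sup; last by exists x.
exists (\sum_i \sum_k cmod (M i k)) => _ [y hy <-].
apply: linf_le => [|i]; first by apply: sumr_ge0 => i _; apply: sumr_ge0 => k _; exact: cmod_ge0.
apply: le_trans (entry_le _ _ _ _ hy) _.
rewrite [leRHS](bigD1 i) //= lerDl; apply: sumr_ge0 => j _; apply: sumr_ge0 => k _; exact: cmod_ge0.
Qed.

Lemma row_le_opn n (M : 'M[C]_n) i : \sum_k cmod (M i k) <= op_norm M.
Proof.
pose x : 'cV[C]_n := \col_k sgc (M i k).
have hx : linf_norm x <= 1 by apply: linf_le => // k; rewrite mxE sgc_mod.
apply: le_trans (opn_ge _ M _ hx); apply: le_trans (linf_ge _ _ i).
rewrite mxE (eq_bigr (fun k => (cmod (M i k))%:C)); last by move=> k _; rewrite mxE mul_sgc.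
rewrite -(rmorph_sum (real_complex R)) cmod_real ger0_norm //.
by apply: sumr_ge0 => k _; exact: cmod_ge0.
Qed.

Lemma sum_delta n (i : 'I_n) : \sum_(k < n) (1 - ((i == k)%:R : R)) = n%:R - 1.
Proof.
rewrite sumrB sumr_const card_ord (bigD1 i) //= eqxx big1 ?addr0 //.
by move=> k /negPf; rewrite eq_sym => ->.
Qed.

Lemma cmod_1d n (i k : 'I_n) : cmod (1 - (i == k)%:R : C) = 1 - (i == k)%:R.
Proof. by case: eqP => _; rewrite ?subrr ?subr0 ?cmod0 ?cmod1. Qed.

End S.

Theorem mainTheorem19 (R : realType) (n : nat) (hn : (0 < n)%N) :
  IndB_C1 R n = (n%:R)%:E.
Proof.
pose i0 : 'I_n := Ordinal hn.
have n1 : (1 <= n%:R :> R) by rewrite ler1n.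
apply/eqP; rewrite eq_le; apply/andP; split.
  pose J : 'M[R[i]]_n := const_mx 1.
  have hJ : maps_into_C1 J.
    move=> x; exists (\sum_k x k ord0); apply/matrixP => i j; rewrite !mxE mulr1 (ord1 j).
    by apply: eq_bigr => k _; rewrite /J mxE mul1r.
  have Jge : n%:R <= op_norm J.
    apply: (le_trans _ (row_le_opn _ _ J i0)).
    by under eq_bigr do rewrite mxE cmod1; rewrite sumr_const card_ord.
  have Jle : op_norm J <= n%:R.
    apply: opn_row => [|i]; first by apply: (le_trans _ n1).
    by under eq_bigr do rewrite mxE cmod1; rewrite sumr_const card_ord.
  have J1 : op_norm (J - 1%:M) <= op_norm J - 1.
    apply: opn_row => [|i]; first by rewrite subr_ge0 (le_trans n1).
    under eq_bigr do rewrite !mxE cmod_1d.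
    by rewrite sum_delta lerB.
  apply: ge_ereal_inf; exists (op_norm J)%:E; first by exists J.
  by rewrite lee_fin.
apply: le_ereal_inf_tmp => _ [T [hT hle] <-]; rewrite lee_fin.
have col : forall i k, T i k = T i0 k.
  move=> i k; have [c hc] := hT (delta_mx k ord0).
  have e : forall j, T j k = c.
    by move=> j; move/matrixP: hc => /(_ j ord0); rewrite -colE !mxE mulr1.
  by rewrite !e.
pose S := \sum_k cmod (T i0 k).
have S0 : 0 <= S by apply: sumr_ge0 => k _; exact: cmod_ge0.
have NS : op_norm T <= S.
  apply: opn_row => // i; rewrite le_eqVlt; apply/orP; left; apply/eqP.
  by apply: eq_bigr => k _; rewrite col.
have row : forall i, \sum_k cmod (T i0 k - (i == k)%:R) <= op_norm T - 1.
  move=> i.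
  apply: (le_trans _ hle); apply: (le_trans _ (row_le_opn _ _ _ i)).
  by rewrite le_eqVlt; apply/orP; left; apply/eqP; apply: eq_bigr => k _; rewrite !mxE col.
have ge1 : forall k, 1 <= cmod (T i0 k).
  move=> k; have h := le_trans (row k) (lerB NS (lexx 1)); move: h; rewrite /S (bigD1 k) //= [X in _ <= X - _](bigD1 k) //= eqxx.
  rewrite (eq_bigr (fun j => cmod (T i0 j))); last first.
    by move=> j /negPf; rewrite eq_sym => ->; rewrite subr0.
  have := cmod_ge0 _ (T i0 k - 1); have := cmodD _ (T i0 k - 1) 1; rewrite subrK.
  move=> h1 h2 h3; lra.
have := row i0.
have : n%:R - 1 <= \sum_k cmod (T i0 k - (i0 == k)%:R).
  rewrite -(sum_delta _ _ i0); apply: ler_sum => k _.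
  case: eqP => _; first by rewrite subrr cmod_ge0.
  by rewrite /= !subr0 ge1.
move=> h1 h2.
lra.
Qed.
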